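(* Let $M,N\in\Lambda$. If $\mathrm{BT}(M)=\mathrm{BT}(N)$ then $M\equiv N$.
   Context: Call-by-value $\lambda$-calculus with permutations: $\lambda$-terms and values are $M,N::=V\mid MN$, $V::=x\mid\lambda x.M$, up to $\alpha$-conversion. Rules: $(\beta_v)$ $(\lambda x.M)V\to M\{x:=V\}$ if $V$ is a value; $(\sigma_1)$ $(\lambda x.M)NP\to(\lambda x.MP)N$ if $x\notin\mathrm{FV}(P)$; $(\sigma_3)$ $V((\lambda x.M)N)\to(\lambda x.VM)N$ if $V$ is a value and $x\notin\mathrm{FV}(V)$. $\to_{\beta_v}$ is the contextual closure of $(\beta_v)$ alone, $\to_{\mathsf v}$ the contextual closure of all three rules, $\twoheadrightarrow$ denotes reflexive-transitive closures. Approximants: $\Lambda_\bot$ is the set of $\lambda$-terms possibly containing a constant $\bot$. $\sqsubseteq$ is the smallest context-closed preorder on $\Lambda_\bot$ with $\bot\sqsubseteq x$ and $\bot\sqsubseteq\lambda x.M$. The set $\mathcal A$ of approximants is generated by ($k\ge0$): $A::=B\mid C$; $B::=x\mid\lambda x.A\mid\bot\mid xBA_1\cdots A_k$; $C::=(\lambda x.A)(yBA_1\cdots A_k)$. For $M\in\Lambda$, $\mathcal A(M)=\{A\in\mathcal A\mid\exists N\in\Lambda,\ M\twoheadrightarrow_{\mathsf v}N,\ A\sqsubseteq N\}$, and the Böhm tree $\mathrm{BT}(M)=\bigsqcup\mathcal A(M)$; in particular $\mathrm{BT}(M)=\mathrm{BT}(N)$ iff $\mathcal A(M)=\mathcal A(N)$.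 Observational equivalence: $M\equiv N$ iff for every single-hole context $C[-]$ such that $C[M]$ and $C[N]$ are closed, $C[M]\twoheadrightarrow_{\beta_v}V$ for some value $V$ if and only if $C[N]\twoheadrightarrow_{\beta_v}U$ for some value $U$. *)

(* Defs.v *)
(* Call-by-value lambda-calculus with permutations (lambda_v + sigma),
   terms represented with de Bruijn indices (so alpha-conversion is built in). *)
From Stdlib Require Import Arith Relations.

Inductive term : Type :=
| Var : nat -> term
| Lam : term -> term
| App : term -> term -> term.

Definition is_value (t : term) : Prop :=
  match t with Var _ | Lam _ => True | App _ _ => False end.

Fixpoint lift (k : nat) (t : term) : term :=
  match t with
  | Var n => if Nat.ltb n k then Var n else Var (S n)
  | Lam b => Lam (lift (S k) b)
  | App a b => App (lift k a) (lift k b)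
  end.

Fixpoint subst (k : nat) (u : term) (t : term) : term :=
  match t with
  | Var n =>
      if Nat.ltb n k then Var n
      else if Nat.eqb n k then u
      else Var (pred n)
  | Lam b => Lam (subst (S k) (lift 0 u) b)
  | App a b => App (subst k u a) (subst k u b)
  end.

Definition subst0 (u t : term) : term := subst 0 u t.

Inductive beta_v_rule : term -> term -> Prop :=
| rule_beta_v : forall M V, is_value V -> beta_v_rule (App (Lam M) V) (subst0 V M).

(* (sigma_1) (\x.M) N P -> (\x.M P) N, x not free in P
   (in de Bruijn form P is lifted under the binder, which encodes x \notin FV(P)) *)
(* (sigma_3) V ((\x.M) N) -> (\x.V M) N, V value, x not free in V *)
Inductive v_rule : term -> term -> Prop :=
| vr_beta : forall M N, beta_v_rule M N -> v_rule M N
| vr_sigma1 : forall M N P,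
    v_rule (App (App (Lam M) N) P) (App (Lam (App M (lift 0 P))) N)
| vr_sigma3 : forall V M N, is_value V ->
    v_rule (App V (App (Lam M) N)) (App (Lam (App (lift 0 V) M)) N).

Inductive ctx_closure (R : term -> term -> Prop) : term -> term -> Prop :=
| cc_root : forall M N, R M N -> ctx_closure R M N
| cc_lam : forall M N, ctx_closure R M N -> ctx_closure R (Lam M) (Lam N)
| cc_appl : forall M N P, ctx_closure R M N -> ctx_closure R (App M P) (App N P)
| cc_appr : forall M N P, ctx_closure R M N -> ctx_closure R (App P M) (App P N).

Definition step_beta_v : term -> term -> Prop := ctx_closure beta_v_rule.
Definition step_v : term -> term -> Prop := ctx_closure v_rule.

Definition red_beta_v : term -> term -> Prop := clos_refl_trans term step_beta_v.
Definition red_v : term -> term -> Prop := clos_refl_trans term step_v.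

Inductive bterm : Type :=
| BBot : bterm
| BVar : nat -> bterm
| BLam : bterm -> bterm
| BApp : bterm -> bterm -> bterm.

Fixpoint embed (t : term) : bterm :=
  match t with
  | Var n => BVar n
  | Lam b => BLam (embed b)
  | App a b => BApp (embed a) (embed b)
  end.

Inductive below : bterm -> bterm -> Prop :=
| below_refl : forall A, below A A
| below_trans : forall A B C, below A B -> below B C -> below A C
| below_bot_var : forall n, below BBot (BVar n)
| below_bot_lam : forall M, below BBot (BLam M)
| below_lam : forall A B, below A B -> below (BLam A) (BLam B)
| below_appl : forall A B P, below A B -> below (BApp A P) (BApp B P)
| below_appr : forall A B P, below A B -> below (BApp P A) (BApp P B).

(* Grammar of approximants:
   A ::= B | C
   B ::= x | \x.A | bot | x B A_1 ... A_k
   C ::= (\x.A)(y B A_1 ... A_k)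
   head_app t  <->  t = x B A_1 ... A_k  (k >= 0) *)
Inductive is_A : bterm -> Prop :=
| A_B : forall t, is_B t -> is_A t
| A_C : forall a h, is_A a -> head_app h -> is_A (BApp (BLam a) h)
with is_B : bterm -> Prop :=
| B_var : forall n, is_B (BVar n)
| B_lam : forall a, is_A a -> is_B (BLam a)
| B_bot : is_B BBot
| B_head : forall h, head_app h -> is_B h
with head_app : bterm -> Prop :=
| H_base : forall x b, is_B b -> head_app (BApp (BVar x) b)
| H_step : forall h a, head_app h -> is_A a -> head_app (BApp h a).

Definition approximants (M : term) (A : bterm) : Prop :=
  is_A A /\ exists N, red_v M N /\ below A (embed N).

(* The Boehm tree BT(M) = sup A(M) is represented by the ideal of its
   approximants; BT(M) = BT(N) iff A(M) = A(N). *)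
Definition BT_eq (M N : term) : Prop :=
  forall A, approximants M A <-> approximants N A.

Inductive context : Type :=
| Hole : context
| CLam : context -> context
| CAppL : context -> term -> context
| CAppR : term -> context -> context.

(* plugging may capture variables *)
Fixpoint plug (C : context) (t : term) : term :=
  match C with
  | Hole => t
  | CLam C' => Lam (plug C' t)
  | CAppL C' u => App (plug C' t) u
  | CAppR u C' => App u (plug C' t)
  end.

Fixpoint closed_at (k : nat) (t : term) : Prop :=
  match t with
  | Var n => n < k
  | Lam b => closed_at (S k) b
  | App a b => closed_at k a /\ closed_at k b
  end.

Definition closed (t : term) : Prop := closed_at 0 t.

Definition converges (t : term) : Prop :=
  exists V, red_beta_v t V /\ is_value V.

Definition obs_equiv (M N : term) : Prop :=
  forall C : context, closed (plug C M) -> closed (plug C N) ->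
    (converges (plug C M) <-> converges (plug C N)).

(* Main.v *)
Require Import Defs.
From Stdlib Require Import Arith Lia List Permutation Relations Classical ClassicalEpsilon Setoid Morphisms.
Import ListNotations.

Inductive arr : Type := Arr : list arr -> list arr -> arr.

Definition adec (x y : arr) : {x = y} + {x <> y} := excluded_middle_informative (x = y).

Ltac perm_count :=
  apply (proj2 (Permutation_count_occ adec _ _)); let x := fresh "x" in intro x;
  repeat match goal with H : Permutation _ _ |- _ =>
    pose proof (proj1 (Permutation_count_occ adec _ _) H x); clear H end;
  repeat rewrite ?count_occ_app in *; simpl in *; lia.

Definition env := nat -> list arr.
Definition env_eq (G D : env) : Prop := forall n, Permutation (G n) (D n).
Definition empty : env := fun _ => [].
Definition eplus (G D : env) : env := fun n => G n ++ D n.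
Definition etl (G : env) : env := fun n => G (S n).
Definition rem (k : nat) (G : env) : env := fun n => if n <? k then G n else G (S n).
Definition ins (k : nat) (G : env) : env :=
  fun n => if n <? k then G n else if n =? k then [] else G (pred n).
Definition single (m : nat) (P : list arr) : env := fun n => if n =? m then P else [].

#[export] Instance env_eq_equiv : Equivalence env_eq.
Proof. split.
 - intros G n; apply Permutation_refl.
 - intros G D H n; symmetry; apply H.
 - intros G D E H1 H2 n; etransitivity; [apply H1|apply H2]. Qed.

#[export] Instance eplus_proper : Proper (env_eq ==> env_eq ==> env_eq) eplus.
Proof. intros a b H c d H' n; unfold eplus; apply Permutation_app; auto. Qed.
#[export] Instance etl_proper : Proper (env_eq ==> env_eq) etl.
Proof. intros a b H n; apply H. Qed.
#[export] Instance rem_proper k : Proper (env_eq ==> env_eq) (rem k).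
Proof. intros a b H n; unfold rem; destruct (n <? k); apply H. Qed.
#[export] Instance ins_proper k : Proper (env_eq ==> env_eq) (ins k).
Proof. intros a b H n; unfold ins; destruct (n <? k); [apply H|destruct (n =? k); [constructor|apply H]]. Qed.

Ltac destr_ifs :=
  repeat match goal with
  | |- context [Nat.ltb ?a ?b] => destruct (Nat.ltb_spec a b)
  | |- context [Nat.leb ?a ?b] => destruct (Nat.leb_spec a b)
  | |- context [Nat.eqb ?a ?b] => destruct (Nat.eqb_spec a b)
  end.

Ltac env_solve :=
  let n := fresh "n" in intro n;
  unfold eplus, etl, rem, ins, single, empty in *;
  destr_ifs; try (exfalso; lia); 
  repeat match goal with E : _ = _ |- _ => subst end;
  repeat (match goal with |- context [pred ?m] => is_var m; destruct m; cbn [pred] in * end);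
  repeat (match goal with |- context [pred (S ?m)] => change (pred (S m)) with m end);
  try (exfalso; lia);
  try perm_count.

Definition cons_env (P : list arr) (G : env) : env := fun n => match n with 0 => P | S m => G m end.

Inductive ty : env -> term -> list arr -> nat -> Prop :=
| T_var : forall G n P, env_eq G (single n P) -> ty G (Var n) P 0
| T_nil : forall G M, env_eq G empty -> ty G (Lam M) [] 0
| T_cons : forall G Gb G2 M P Q L s1 s2,
    ty Gb M Q s1 -> Permutation (Gb 0) P -> ty G2 (Lam M) L s2 ->
    env_eq G (eplus (etl Gb) G2) -> ty G (Lam M) (Arr P Q :: L) (S (s1 + s2))
| T_app : forall G G1 G2 M N P Q Q' s1 s2,
    ty G1 M [Arr P Q] s1 -> ty G2 N P s2 -> env_eq G (eplus G1 G2) ->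
    Permutation Q Q' -> ty G (App M N) Q' (S (s1 + s2)).

Lemma ty_env G M P s : ty G M P s -> forall G', env_eq G G' -> ty G' M P s.
Proof.
  intros H G' E; destruct H.
  - apply T_var; rewrite <- E; auto.
  - apply T_nil; rewrite <- E; auto.
  - eapply T_cons; eauto; rewrite <- E; auto.
  - eapply T_app; eauto; rewrite <- E; auto.
Qed.

#[export] Instance ty_proper : Proper (env_eq ==> eq ==> eq ==> eq ==> iff) ty.
Proof. intros a b H ? M -> ? P -> ? s ->; split; intro; eapply ty_env; eauto; now symmetry. Qed.

Lemma inv_var G n P s : ty G (Var n) P s -> env_eq G (single n P) /\ s = 0.
Proof. intro H; inversion H; subst; auto. Qed.
Lemma inv_nil G M s : ty G (Lam M) [] s -> env_eq G empty /\ s = 0.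
Proof. intro H; inversion H; subst; auto. Qed.
Lemma inv_cons G M a L s : ty G (Lam M) (a :: L) s -> exists Gb G2 P Q s1 s2,
  a = Arr P Q /\ ty Gb M Q s1 /\ Permutation (Gb 0) P /\ ty G2 (Lam M) L s2 /\
  env_eq G (eplus (etl Gb) G2) /\ s = S (s1 + s2).
Proof. intro H; inversion H; subst; repeat eexists; eauto. Qed.
Lemma inv_app G M N Q' s : ty G (App M N) Q' s -> exists G1 G2 P Q s1 s2,
  ty G1 M [Arr P Q] s1 /\ ty G2 N P s2 /\ env_eq G (eplus G1 G2) /\ Permutation Q Q' /\ s = S (s1 + s2).
Proof. intro H; inversion H; subst; repeat eexists; eauto. Qed.

Lemma ty_lam_perm G M L s : ty G (Lam M) L s -> forall L', Permutation L L' -> ty G (Lam M) L' s.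
Proof.
  intros H L' HP; revert G s H; induction HP; intros G s H.
  - auto.
  - destruct (inv_cons _ _ _ _ _ H) as (Gb&G2&P&Q&s1&s2&->&H1&H2&H3&H4&->).
    eapply T_cons; eauto.
  - destruct (inv_cons _ _ _ _ _ H) as (Gb&G2&P&Q&s1&s2&->&H1&H2&H3&H4&->).
    destruct (inv_cons _ _ _ _ _ H3) as (Gb'&G2'&P'&Q'&s1'&s2'&->&H1'&H2'&H3'&H4'&->).
    replace (S (s1 + S (s1' + s2'))) with (S (s1' + S (s1 + s2'))) by lia.
    eapply T_cons; eauto. eapply T_cons; eauto. reflexivity.
    rewrite H4, H4'. env_solve.
  - eauto.
Qed.

Lemma ty_perm G M P s : ty G M P s -> forall P', Permutation P P' -> ty G M P' s.
Proof.
  intros H P' HP; destruct H.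
  - apply T_var. rewrite H. env_solve.
  - apply ty_lam_perm with (L := []); [apply T_nil; auto| auto].
  - eapply ty_lam_perm; [eapply T_cons; eauto | auto].
  - eapply T_app; eauto. etransitivity; eauto.
Qed.

Lemma perm_nil_inv (l : list arr) : Permutation l [] -> l = [].
Proof. intro H; apply Permutation_sym, Permutation_nil in H; auto. Qed.

Lemma value_nil G u s : is_value u -> ty G u [] s -> env_eq G empty /\ s = 0.
Proof.
  destruct u; simpl; intros Hv H; try contradiction.
  - apply inv_var in H as [H ->]; split; auto. rewrite H; env_solve.
  - apply inv_nil in H; auto.
Qed.

Lemma value_nil_ty G u : is_value u -> env_eq G empty -> ty G u [] 0.
Proof.
  destruct u; simpl; intros Hv H; try contradiction.
  - apply T_var. rewrite H; env_solve.
  - apply T_nil; auto.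
Qed.

Lemma value_split u : is_value u -> forall P1 P2 G s, ty G u (P1 ++ P2) s ->
  exists G1 G2 s1 s2, env_eq G (eplus G1 G2) /\ s = s1 + s2 /\ ty G1 u P1 s1 /\ ty G2 u P2 s2.
Proof.
  destruct u as [n|M|]; simpl; intros Hv; try contradiction.
  - intros P1 P2 G s H; apply inv_var in H as [H ->].
    exists (single n P1), (single n P2), 0, 0; repeat split; try (apply T_var; reflexivity).
    rewrite H; env_solve.
  - induction P1 as [|a P1 IH]; intros P2 G s H.
    + exists empty, G, 0, s; repeat split; auto. env_solve. apply T_nil; reflexivity.
    + simpl in H. destruct (inv_cons _ _ _ _ _ H) as (Gb&G2&P&Q&s1&s2&->&H1&H2&H3&H4&->).
      destruct (IH _ _ _ H3) as (G1'&G2'&t1&t2&E&->&Ha&Hb).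
      exists (eplus (etl Gb) G1'), G2', (S (s1 + t1)), t2; repeat split.
      * rewrite H4, E; env_solve.
      * lia.
      * eapply T_cons; eauto; reflexivity.
      * auto.
Qed.

Lemma value_merge u : is_value u -> forall P1 G1 s1, ty G1 u P1 s1 -> forall P2 G2 s2, ty G2 u P2 s2 ->
  ty (eplus G1 G2) u (P1 ++ P2) (s1 + s2).
Proof.
  destruct u as [n|M|]; simpl; intros Hv; try contradiction.
  - intros P1 G1 s1 H1 P2 G2 s2 H2. apply inv_var in H1 as [H1 ->]; apply inv_var in H2 as [H2 ->].
    apply T_var. rewrite H1, H2; env_solve.
  - induction P1 as [|a P1 IH]; intros G1 s1 H1 P2 G2 s2 H2.
    + apply inv_nil in H1 as [H1 ->]. eapply ty_env; [simpl; exact H2|]. rewrite H1; env_solve.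
    + destruct (inv_cons _ _ _ _ _ H1) as (Gb&G3&P&Q&t1&t2&->&Ha&Hb&Hc&Hd&->).
      simpl. replace (S (t1 + t2 + s2)) with (S (t1 + (t2 + s2))) by lia.
      eapply T_cons; [exact Ha|exact Hb|apply (IH _ _ Hc _ _ _ H2)|]. rewrite Hd; env_solve.
Qed.

Lemma lift_ty M : forall G P s k, ty G M P s -> ty (ins k G) (lift k M) P s.
Proof.
  induction M as [n|M IH|M1 IH1 M2 IH2]; intros G P s k H.
  - apply inv_var in H as [H ->]. simpl. destruct (Nat.ltb_spec n k); apply T_var; rewrite H; env_solve.
  - simpl. revert G s H; induction P as [|a P IHP]; intros G s H.
    + apply inv_nil in H as [H ->]. apply T_nil. rewrite H; env_solve.
    + destruct (inv_cons _ _ _ _ _ H) as (Gb&G2&P0&Q&s1&s2&->&Ha&Hb&Hc&Hd&->).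
      eapply T_cons. apply (IH _ _ _ (S k) Ha). 
      * unfold ins; simpl. auto.
      * apply IHP; eauto.
      * rewrite Hd; env_solve.
  - apply inv_app in H as (G1&G2&P0&Q&s1&s2&H1&H2&E&HQ&->). simpl.
    eapply T_app; eauto. rewrite E; env_solve.
Qed.

Lemma lift_inv M : forall G P s k, ty G (lift k M) P s -> G k = [] /\ ty (rem k G) M P s.
Proof.
  induction M as [n|M IH|M1 IH1 M2 IH2]; intros G P s k H.
  - simpl in H. destruct (Nat.ltb_spec n k); apply inv_var in H as [H ->]; split.
    + apply perm_nil_inv. rewrite (H k). unfold single. destruct (Nat.eqb_spec k n); [lia|constructor].
    + apply T_var. rewrite H; env_solve.
    + apply perm_nil_inv. rewrite (H k). unfold single. destruct (Nat.eqb_spec k (S n)); [lia|constructor].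
    + apply T_var. rewrite H; env_solve.
  - simpl in H. revert G s H; induction P as [|a P IHP]; intros G s H.
    + apply inv_nil in H as [H ->]. split. apply perm_nil_inv, H. apply T_nil. rewrite H; env_solve.
    + destruct (inv_cons _ _ _ _ _ H) as (Gb&G2&P0&Q&s1&s2&->&Ha&Hb&Hc&Hd&->).
      destruct (IH _ _ _ _ Ha) as [Ea Ha']. destruct (IHP _ _ Hc) as [Ec Hc'].
      split.
      * apply perm_nil_inv. rewrite (Hd k). unfold eplus, etl. rewrite Ea, Ec. constructor.
      * eapply T_cons; eauto. rewrite Hd; env_solve.
  - simpl in H. apply inv_app in H as (G1&G2&P0&Q&s1&s2&H1&H2&E&HQ&->).
    destruct (IH1 _ _ _ _ H1) as [E1 H1']. destruct (IH2 _ _ _ _ H2) as [E2 H2'].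
    split.
    + apply perm_nil_inv. rewrite (E k). unfold eplus. rewrite E1, E2. constructor.
    + eapply T_app; eauto. rewrite E; env_solve.
Qed.

Lemma lift_value u k : is_value u -> is_value (lift k u).
Proof. destruct u; simpl; auto. destruct (n <? k); simpl; auto. Qed.

Lemma subst_ty M : forall G Q s k u D su, ty G M Q s -> is_value u -> ty D u (G k) su ->
  ty (eplus (rem k G) D) (subst k u M) Q (s + su).
Proof.
  induction M as [n|M IH|M1 IH1 M2 IH2]; intros G Q s k u D su H Hv Hu.
  - apply inv_var in H as [H ->]. simpl.
    assert (Hk : Permutation (G k) (if k =? n then Q else [])) by (rewrite (H k); reflexivity).
    destruct (Nat.ltb_spec n k); [|destruct (Nat.eqb_spec n k)].
    + destruct (Nat.eqb_spec k n); [lia|].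
      apply (ty_perm _ _ _ _ Hu) in Hk. apply value_nil in Hk as [HD ->]; auto.
      apply T_var. rewrite H, HD; env_solve.
    + subst. rewrite Nat.eqb_refl in Hk. apply (ty_perm _ _ _ _ Hu) in Hk.
      eapply ty_env; [exact Hk|]. rewrite H; env_solve.
    + destruct (Nat.eqb_spec k n); [lia|].
      apply (ty_perm _ _ _ _ Hu) in Hk. apply value_nil in Hk as [HD ->]; auto.
      apply T_var. rewrite H, HD; env_solve.
  - simpl. revert G s D su H Hu; induction Q as [|a Q IHQ]; intros G s D su H Hu.
    + apply inv_nil in H as [H ->].
      assert (Hk : Permutation (G k) []) by (rewrite (H k); reflexivity).
      apply (ty_perm _ _ _ _ Hu) in Hk. apply value_nil in Hk as [HD ->]; auto.
      apply T_nil. rewrite H, HD; env_solve.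
    + destruct (inv_cons _ _ _ _ _ H) as (Gb&G2&P0&Q0&s1&s2&->&Ha&Hb&Hc&Hd&->).
      assert (Hk : Permutation (G k) (Gb (S k) ++ G2 k)) by (rewrite (Hd k); reflexivity).
      apply (ty_perm _ _ _ _ Hu) in Hk.
      destruct (value_split _ Hv _ _ _ _ Hk) as (D1&D2&t1&t2&ED&->&Hu1&Hu2).
      pose proof (IH _ _ _ (S k) (lift 0 u) (ins 0 D1) t1 Ha (lift_value _ _ Hv) (lift_ty _ _ _ _ 0 Hu1)) as Ha'.
      pose proof (IHQ _ _ _ _ Hc Hu2) as Hc'.
      match goal with |- ty _ _ _ ?x => replace x with (S ((s1 + t1) + (s2 + t2))) by lia end.
      eapply T_cons; [exact Ha'| |exact Hc'|].
      * unfold eplus, rem, ins; simpl. rewrite app_nil_r; auto.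
      * rewrite Hd, ED; env_solve.
  - apply inv_app in H as (G1&G2&P0&Q0&s1&s2&H1&H2&E&HQ&->). simpl.
    assert (Hk : Permutation (G k) (G1 k ++ G2 k)) by (rewrite (E k); reflexivity).
    apply (ty_perm _ _ _ _ Hu) in Hk.
    destruct (value_split _ Hv _ _ _ _ Hk) as (D1&D2&t1&t2&ED&->&Hu1&Hu2).
    match goal with |- ty _ _ _ ?x => replace x with (S ((s1 + t1) + (s2 + t2))) by lia end.
    eapply T_app; [exact (IH1 _ _ _ _ _ _ _ H1 Hv Hu1)|exact (IH2 _ _ _ _ _ _ _ H2 Hv Hu2)| |exact HQ].
    rewrite E, ED; env_solve.
Qed.

Lemma antisubst M : forall k u G Q s, is_value u -> ty G (subst k u M) Q s ->
  exists G' D s1 s2, ty G' M Q s1 /\ ty D u (G' k) s2 /\ env_eq G (eplus (rem k G') D).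
Proof.
  induction M as [n|M IH|M1 IH1 M2 IH2]; intros k u G Q s Hv H.
  - simpl in H. destruct (Nat.ltb_spec n k); [|destruct (Nat.eqb_spec n k)].
    + apply inv_var in H as [H ->].
      exists (single n Q), empty, 0, 0; repeat split.
      * apply T_var; reflexivity.
      * unfold single. destruct (Nat.eqb_spec k n); [lia|]. apply value_nil_ty; auto; reflexivity.
      * rewrite H; env_solve.
    + subst. exists (single k Q), G, 0, s; repeat split.
      * apply T_var; reflexivity.
      * unfold single. rewrite Nat.eqb_refl. auto.
      * env_solve.
    + apply inv_var in H as [H ->].
      exists (single n Q), empty, 0, 0; repeat split.
      * apply T_var; reflexivity.
      * unfold single. destruct (Nat.eqb_spec k n); [lia|]. apply value_nil_ty; auto; reflexivity.
      * rewrite H; env_solve.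
  - simpl in H. revert G s H; induction Q as [|a Q IHQ]; intros G s H.
    + apply inv_nil in H as [H ->].
      exists empty, empty, 0, 0; repeat split.
      * apply T_nil; reflexivity.
      * apply value_nil_ty; auto; reflexivity.
      * rewrite H; env_solve.
    + destruct (inv_cons _ _ _ _ _ H) as (Gb&G2&P0&Q0&s1&s2&->&Ha&Hb&Hc&Hd&->).
      destruct (IH _ _ _ _ _ (lift_value u 0 Hv) Ha) as (Gb'&Db&t1&t2&Ha'&Hu1&Eb).
      apply lift_inv in Hu1 as [Db0 Hu1].
      destruct (IHQ _ _ Hc) as (G2'&D2&t3&t4&Hc'&Hu2&E2).
      exists (eplus (etl Gb') G2'), (eplus (rem 0 Db) D2), (S (t1 + t3)), (t2 + t4); repeat split.
      * eapply T_cons; [exact Ha'| |exact Hc'|reflexivity].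
        rewrite <- Hb. rewrite (Eb 0). unfold eplus, rem; simpl. rewrite Db0, app_nil_r. reflexivity.
      * apply value_merge; auto.
      * rewrite Hd, Eb, E2. intro n. unfold eplus, etl, rem. simpl.
        destruct (Nat.ltb_spec (S n) (S k)); destruct (Nat.ltb_spec n k); try lia; perm_count.
  - simpl in H. apply inv_app in H as (G1&G2&P0&Q0&s1&s2&H1&H2&E&HQ&->).
    destruct (IH1 _ _ _ _ _ Hv H1) as (G1'&D1&t1&t2&H1'&Hu1&E1).
    destruct (IH2 _ _ _ _ _ Hv H2) as (G2'&D2&t3&t4&H2'&Hu2&E2).
    exists (eplus G1' G2'), (eplus D1 D2), (S (t1 + t3)), (t2 + t4); repeat split.
    * eapply T_app; eauto; reflexivity.
    * apply value_merge; auto.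
    * rewrite E, E1, E2. env_solve.
Qed.

Lemma beta_sr M V G Q s : is_value V -> ty G (App (Lam M) V) Q s ->
  exists s', ty G (subst0 V M) Q s' /\ s' < s.
Proof.
  intros Hv H. apply inv_app in H as (G1&G2&P&Q0&s1&s2&H1&H2&E&HQ&->).
  destruct (inv_cons _ _ _ _ _ H1) as (Gb&Gr&P'&Q'&sb&sr&Heq&Hb&HP&Hr&E1&->).
  injection Heq as <- <-. apply inv_nil in Hr as [Hr ->].
  apply Permutation_sym in HP. pose proof (ty_perm _ _ _ _ H2 _ HP) as H2'.
  pose proof (subst_ty _ _ _ _ 0 _ _ _ Hb Hv H2') as H3.
  exists (sb + s2); split; [|lia].
  eapply ty_perm; [|exact HQ]. eapply ty_env; [exact H3|].
  rewrite E, E1, Hr. env_solve.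
Qed.

Lemma beta_exp M V G Q s : is_value V -> ty G (subst0 V M) Q s ->
  exists s', ty G (App (Lam M) V) Q s'.
Proof.
  intros Hv H. destruct (antisubst _ _ _ _ _ _ Hv H) as (G'&D&s1&s2&H1&H2&E).
  eexists. eapply T_app; [|exact H2| |reflexivity].
  - eapply T_cons; [exact H1|reflexivity|apply T_nil; reflexivity|reflexivity].
  - rewrite E. env_solve.
Qed.

Inductive sigma_rule : term -> term -> Prop :=
| sr1 : forall M N P, sigma_rule (App (App (Lam M) N) P) (App (Lam (App M (lift 0 P))) N)
| sr3 : forall V M N, is_value V ->
    sigma_rule (App V (App (Lam M) N)) (App (Lam (App (lift 0 V) M)) N).

Lemma perm_single (a : arr) l : Permutation l [a] -> l = [a].
Proof. intro H. apply Permutation_sym, Permutation_length_1_inv in H; auto. Qed.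

Lemma sigma_sr M N : sigma_rule M N -> forall G Q s, ty G M Q s <-> ty G N Q s.
Proof.
  intros [M0 N0 P0|V M0 N0 Hv] G Q s; split; intro H.
  - apply inv_app in H as (G1&G2&R&Q1&s1&s2&H1&H2&E&HQ&->).
    apply inv_app in H1 as (G11&G12&S0&X&s11&s12&H11&H12&E1&HX&->).
    apply perm_single in HX; subst X.
    destruct (inv_cons _ _ _ _ _ H11) as (Gb&Gr&P'&Q'&sb&sr&Heq&Hb&HP&Hr&E2&->).
    injection Heq as <- <-. apply inv_nil in Hr as [Hr ->].
    pose proof (lift_ty _ _ _ _ 0 H2) as H2'.
    replace (S (S (S (sb + 0) + s12) + s2)) with (S (S (S (sb + s2) + 0) + s12)) by lia.
    eapply T_app; [|exact H12| |reflexivity].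
    + apply T_cons with (Gb := eplus Gb (ins 0 G2)) (G2 := empty).
      * eapply T_app; [exact Hb|exact H2'|reflexivity|exact HQ].
      * rewrite <- HP. unfold eplus, ins; simpl. rewrite app_nil_r; reflexivity.
      * apply T_nil; reflexivity.
      * reflexivity.
    + rewrite E, E1, E2, Hr. env_solve.
  - apply inv_app in H as (G1&G2&S0&Q1&s1&s2&H1&H2&E&HQ&->).
    destruct (inv_cons _ _ _ _ _ H1) as (Gb&Gr&P'&Q'&sb&sr&Heq&Hb&HP&Hr&E2&->).
    injection Heq as <- <-. apply inv_nil in Hr as [Hr ->].
    apply inv_app in Hb as (Gm&Gp&R&Q2&sm&sp&Hm&Hp&Eb&HQ2&->).
    apply lift_inv in Hp as [Gp0 Hp].
    replace (S (S (S (sm + sp) + 0) + s2)) with (S (S (S (sm + 0) + s2) + sp)) by lia.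
    eapply T_app; [|exact Hp| |exact (Permutation_trans HQ2 HQ)].
    + eapply T_app; [|exact H2|reflexivity|reflexivity].
      apply T_cons with (Gb := Gm) (G2 := empty); [exact Hm| |apply T_nil; reflexivity|reflexivity].
      rewrite <- HP, (Eb 0). unfold eplus. rewrite Gp0, app_nil_r. reflexivity.
    + rewrite E, E2, Hr, Eb. env_solve.
  - apply inv_app in H as (G1&G2&R&Q1&s1&s2&H1&H2&E&HQ&->).
    apply inv_app in H2 as (G21&G22&S0&X&s21&s22&H21&H22&E1&HX&->).
    destruct (inv_cons _ _ _ _ _ H21) as (Gb&Gr&P'&Q'&sb&sr&Heq&Hb&HP&Hr&E2&->).
    injection Heq as <- <-. apply inv_nil in Hr as [Hr ->].
    pose proof (lift_ty _ _ _ _ 0 H1) as H1'.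
    pose proof (ty_perm _ _ _ _ Hb _ HX) as Hb'.
    replace (S (s1 + S (S (sb + 0) + s22))) with (S (S (S (s1 + sb) + 0) + s22)) by lia.
    eapply T_app; [|exact H22| |reflexivity].
    + apply T_cons with (Gb := eplus (ins 0 G1) Gb) (G2 := empty).
      * eapply T_app; [exact H1'|exact Hb'|reflexivity|exact HQ].
      * rewrite <- HP. unfold eplus, ins; simpl. reflexivity.
      * apply T_nil; reflexivity.
      * reflexivity.
    + rewrite E, E1, E2, Hr. env_solve.
  - apply inv_app in H as (G1&G2&S0&Q1&s1&s2&H1&H2&E&HQ&->).
    destruct (inv_cons _ _ _ _ _ H1) as (Gb&Gr&P'&Q'&sb&sr&Heq&Hb&HP&Hr&E2&->).
    injection Heq as <- <-. apply inv_nil in Hr as [Hr ->].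
    apply inv_app in Hb as (Gv&Gm&R&Q2&sv&sm&Hv'&Hm&Eb&HQ2&->).
    apply lift_inv in Hv' as [Gv0 Hv'].
    replace (S (S (S (sv + sm) + 0) + s2)) with (S (sv + S (S (sm + 0) + s2))) by lia.
    eapply T_app; [exact Hv'| | |exact (Permutation_trans HQ2 HQ)].
    + eapply T_app; [|exact H2|reflexivity|reflexivity].
      apply T_cons with (Gb := Gm) (G2 := empty); [exact Hm| |apply T_nil; reflexivity|reflexivity].
      rewrite <- HP, (Eb 0). unfold eplus. rewrite Gv0. reflexivity.
    + rewrite E, E2, Hr, Eb. env_solve.
Qed.

Lemma ctx_pres (R : term -> term -> Prop) :
  (forall M N, R M N -> forall G Q s, ty G M Q s <-> ty G N Q s) ->
  forall M N, ctx_closure R M N -> forall G Q s, ty G M Q s <-> ty G N Q s.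
Proof.
  intros HR M N H; induction H as [M N H|M N H IH|M N P H IH|M N P H IH]; intros G Q s.
  - apply HR; auto.
  - revert G s; induction Q as [|a Q IHQ]; intros G s; split; intro H1.
    + apply inv_nil in H1 as [H1 ->]; apply T_nil; auto.
    + apply inv_nil in H1 as [H1 ->]; apply T_nil; auto.
    + destruct (inv_cons _ _ _ _ _ H1) as (Gb&G2&P0&Q0&s1&s2&->&Ha&Hb&Hc&Hd&->).
      eapply T_cons; [apply IH; exact Ha|exact Hb|apply IHQ; exact Hc|exact Hd].
    + destruct (inv_cons _ _ _ _ _ H1) as (Gb&G2&P0&Q0&s1&s2&->&Ha&Hb&Hc&Hd&->).
      eapply T_cons; [apply IH; exact Ha|exact Hb|apply IHQ; exact Hc|exact Hd].
  - split; intro H1; apply inv_app in H1 as (G1&G2&P0&Q0&s1&s2&H1&H2&E&HQ&->);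
      eapply T_app; eauto; apply IH; auto.
  - split; intro H1; apply inv_app in H1 as (G1&G2&P0&Q0&s1&s2&H1&H2&E&HQ&->);
      eapply T_app; eauto; apply IH; auto.
Qed.

Lemma ctx_exp (R : term -> term -> Prop) :
  (forall M N, R M N -> forall G Q s, ty G N Q s -> exists s', ty G M Q s') ->
  forall M N, ctx_closure R M N -> forall G Q s, ty G N Q s -> exists s', ty G M Q s'.
Proof.
  intros HR M N H; induction H as [M N H|M N H IH|M N P H IH|M N P H IH]; intros G Q s H1.
  - eapply HR; eauto.
  - revert G s H1; induction Q as [|a Q IHQ]; intros G s H1.
    + apply inv_nil in H1 as [H1 ->]; exists 0; apply T_nil; auto.
    + destruct (inv_cons _ _ _ _ _ H1) as (Gb&G2&P0&Q0&s1&s2&->&Ha&Hb&Hc&Hd&->).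
      destruct (IH _ _ _ Ha) as [t1 Ha']. destruct (IHQ _ _ Hc) as [t2 Hc'].
      eexists; eapply T_cons; eauto.
  - apply inv_app in H1 as (G1&G2&P0&Q0&s1&s2&H1&H2&E&HQ&->).
    destruct (IH _ _ _ H1) as [t1 H1']. eexists; eapply T_app; eauto.
  - apply inv_app in H1 as (G1&G2&P0&Q0&s1&s2&H1&H2&E&HQ&->).
    destruct (IH _ _ _ H2) as [t2 H2']. eexists; eapply T_app; eauto.
Qed.

Definition step_sigma := ctx_closure sigma_rule.
Notation step_beta := step_beta_v.

Lemma step_sigma_pres M N : step_sigma M N -> forall G Q s, ty G M Q s <-> ty G N Q s.
Proof. apply ctx_pres, sigma_sr. Qed.

Lemma step_beta_exp M N : step_beta M N -> forall G Q s, ty G N Q s -> exists s', ty G M Q s'.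
Proof.
  apply ctx_exp. intros M0 N0 H G Q s H1. destruct H as [M1 V Hv]. eapply beta_exp; eauto.
Qed.

Lemma ctx_mono (R R' : term -> term -> Prop) : (forall M N, R M N -> R' M N) ->
  forall M N, ctx_closure R M N -> ctx_closure R' M N.
Proof. intros HR M N H; induction H; [apply cc_root; auto|apply cc_lam; auto|apply cc_appl; auto|apply cc_appr; auto]. Qed.

Lemma beta_v M N : step_beta M N -> step_v M N.
Proof. apply ctx_mono. intros; apply vr_beta; auto. Qed.

Lemma sigma_v M N : step_sigma M N -> step_v M N.
Proof. apply ctx_mono. intros M0 N0 []; [apply vr_sigma1|apply vr_sigma3; auto]. Qed.

Lemma v_split M N : step_v M N -> step_beta M N \/ step_sigma M N.
Proof.
  intro H; induction H as [M N H|M N H IH|M N P H IH|M N P H IH].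
  - destruct H as [M N H| | ].
    + left; apply cc_root; auto.
    + right; apply cc_root; constructor.
    + right; apply cc_root; constructor; auto.
  - destruct IH; [left|right]; apply cc_lam; auto.
  - destruct IH; [left|right]; apply cc_appl; auto.
  - destruct IH; [left|right]; apply cc_appr; auto.
Qed.

Lemma step_v_exp M N : step_v M N -> forall G Q s, ty G N Q s -> exists s', ty G M Q s'.
Proof.
  intros H G Q s H1. destruct (v_split _ _ H) as [H2|H2].
  - eapply step_beta_exp; eauto.
  - exists s. apply (step_sigma_pres _ _ H2); auto.
Qed.

Fixpoint phi (t : term) : nat :=
  match t with
  | Var _ => 2
  | Lam b => S (phi b)
  | App a b => phi a * (phi b * phi b)
  end.

Lemma phi_ge2 t : 2 <= phi t.
Proof. induction t; simpl; nia. Qed.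

Lemma phi_lift t k : phi (lift k t) = phi t.
Proof. revert k; induction t; intro k; simpl; auto. destruct (n <? k); auto. Qed.

Lemma a1 m n p : 2 <= n -> 2 <= p -> S (m * (p * p)) * (n * n) < S m * (n * n) * (p * p).
Proof. intros Hn Hp. assert (4 <= p*p) by nia. assert (4 <= n*n) by nia.
  remember (p*p) as q; remember (n*n) as r. nia. Qed.
Lemma a2 v m n : 2 <= n -> 2 <= v -> S (v * (m * m)) * (n * n) < v * (S m * (n * n) * (S m * (n * n))).
Proof. intros Hn Hv. assert (4 <= n*n) by nia. remember (n*n) as r.
  assert (S (v * (m*m)) < v * (S m * S m) * r) by nia. nia. Qed.

Lemma sigma_phi M N : step_sigma M N -> phi N < phi M.
Proof.
  intro H; induction H as [M N H|M N H IH|M N P H IH|M N P H IH]; simpl.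
  - destruct H as [M N P|V M N Hv]; simpl; rewrite phi_lift.
    + apply a1; apply phi_ge2.
    + apply a2; apply phi_ge2.
  - lia.
  - pose proof (phi_ge2 P); nia.
  - pose proof (phi_ge2 P). apply Nat.mul_lt_mono_pos_l; [lia|]. apply Nat.mul_lt_mono; auto.
Qed.

Lemma env_plus_empty G1 G2 : env_eq (eplus G1 G2) empty -> env_eq G1 empty /\ env_eq G2 empty.
Proof.
  intro H; split; intro n; specialize (H n); unfold eplus, empty in *;
  apply perm_nil_inv, app_eq_nil in H as [H1 H2]; rewrite ?H1, ?H2; constructor.
Qed.

Lemma progress t : forall G P s, env_eq G empty -> ty G t P s ->
  is_value t \/ exists t1 s1, step_beta t t1 /\ ty G t1 P s1 /\ s1 < s.
Proof.
  induction t as [n|b IH|a IHa c IHc]; intros G P s HG H; [left; simpl; auto|left; simpl; auto|right].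
  pose proof H as H0.
  apply inv_app in H as (G1&G2&P0&Q0&s1&s2&H1&H2&E&HQ&->).
  rewrite HG in E. symmetry in E. apply env_plus_empty in E as [E1 E2].
  destruct (IHa _ _ _ E1 H1) as [Va|(a1&t1&Ha&Ha1&Hlt)].
  - destruct a as [n|b|]; simpl in Va; try contradiction.
    + apply inv_var in H1 as [H1 _]. pose proof (Permutation_trans (Permutation_sym (E1 n)) (H1 n)) as H3.
      unfold single, empty in H3. rewrite Nat.eqb_refl in H3. apply Permutation_nil in H3. discriminate.
    + destruct (IHc _ _ _ E2 H2) as [Vc|(c1&t2&Hc&Hc1&Hlt)].
      * destruct (beta_sr _ _ _ _ _ Vc H0) as (s'&H3&Hlt).
        exists (subst0 c b), s'; repeat split; auto. apply cc_root. constructor; auto.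
      * exists (App (Lam b) c1), (S (s1 + t2)); repeat split; [apply cc_appr; auto| |lia].
        eapply T_app; eauto; rewrite HG, E1, E2; env_solve.
  - exists (App a1 c), (S (t1 + s2)); repeat split; [apply cc_appl; auto| |lia].
    eapply T_app; eauto; rewrite HG, E1, E2; env_solve.
Qed.

Lemma sound s : forall t G P, env_eq G empty -> ty G t P s -> converges t.
Proof.
  induction s as [s IH] using lt_wf_ind; intros t G P HG H.
  destruct (progress _ _ _ _ HG H) as [V|(t1&s1&Hs&Ht1&Hlt)].
  - exists t; split; [apply rt_refl|auto].
  - destruct (IH _ Hlt _ _ _ HG Ht1) as (V&HV&Vv). exists V; split; auto.
    eapply rt_trans; [apply rt_step; exact Hs|exact HV].
Qed.

Lemma red_beta_exp t u : red_beta_v t u -> forall G P s, ty G u P s -> exists s', ty G t P s'.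
Proof.
  intro H; induction H as [t u H|t|t u w H1 IH1 H2 IH2]; intros G P s Hs.
  - eapply step_beta_exp; eauto.
  - eauto.
  - destruct (IH2 _ _ _ Hs) as [s' Hs']. eapply IH1; eauto.
Qed.

Lemma red_v_exp t u : red_v t u -> forall G P s, ty G u P s -> exists s', ty G t P s'.
Proof.
  intro H; induction H as [t u H|t|t u w H1 IH1 H2 IH2]; intros G P s Hs.
  - eapply step_v_exp; eauto.
  - eauto.
  - destruct (IH2 _ _ _ Hs) as [s' Hs']. eapply IH1; eauto.
Qed.

Lemma complete t : converges t -> exists s, ty empty t [] s.
Proof.
  intros (V&HV&Vv). eapply red_beta_exp; [exact HV|]. apply value_nil_ty; auto; reflexivity.
Qed.

Definition typing := ((env * list arr) * nat)%type.
Definition tys (N : term) (J : list typing) : Prop :=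
  Forall (fun j => ty (fst (fst j)) N (snd (fst j)) (snd j)) J.
Definition shape (J : list typing) := map (@fst (env * list arr) nat) J.
Fixpoint total (J : list typing) : nat := match J with [] => 0 | j :: J' => snd j + total J' end.

Lemma total_app J1 J2 : total (J1 ++ J2) = total J1 + total J2.
Proof. induction J1; simpl; lia. Qed.

Lemma ctx_decomp C : forall G Q s M, ty G (plug C M) Q s -> exists J, tys M J /\
  forall M' J', shape J' = shape J -> tys M' J' -> exists s', ty G (plug C M') Q s'.
Proof.
  induction C as [|C IH|C IH u|u C IH]; intros G Q s M H; simpl in *.
  - exists [((G, Q), s)]; split; [constructor; auto|].
    intros M' J' HJ HM. destruct J' as [|j' J'']; try discriminate. simpl in HJ. injection HJ as Hj _.
    inversion HM; subst. rewrite Hj in H2. simpl in H2. eauto.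
  - revert G s H; induction Q as [|a Q IHQ]; intros G s H.
    + apply inv_nil in H as [H ->]. exists []; split; [constructor|]. intros. exists 0; apply T_nil; auto.
    + destruct (inv_cons _ _ _ _ _ H) as (Gb&G2&P0&Q0&s1&s2&->&Ha&Hb&Hc&Hd&->).
      destruct (IH _ _ _ _ Ha) as (J1&HJ1&R1). destruct (IHQ _ _ Hc) as (J2&HJ2&R2).
      exists (J1 ++ J2); split; [apply Forall_app; auto|].
      intros M' J' HJ HM. unfold shape in HJ; rewrite map_app in HJ.
      apply map_eq_app in HJ as (J1'&J2'&->&E1&E2). apply Forall_app in HM as [HM1 HM2].
      destruct (R1 _ _ E1 HM1) as [t1 T1]. destruct (R2 _ _ E2 HM2) as [t2 T2].
      eexists; eapply T_cons; eauto.
  - apply inv_app in H as (G1&G2&P0&Q0&s1&s2&H1&H2&E&HQ&->).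
    destruct (IH _ _ _ _ H1) as (J&HJ&R). exists J; split; auto.
    intros M' J' E' HM. destruct (R _ _ E' HM) as [t T]. eexists; eapply T_app; eauto.
  - apply inv_app in H as (G1&G2&P0&Q0&s1&s2&H1&H2&E&HQ&->).
    destruct (IH _ _ _ _ H2) as (J&HJ&R). exists J; split; auto.
    intros M' J' E' HM. destruct (R _ _ E' HM) as [t T]. eexists; eapply T_app; eauto.
Qed.

Inductive sb : bterm -> bterm -> Prop :=
| sb_bb : sb BBot BBot
| sb_bv n : sb BBot (BVar n)
| sb_bl M : sb BBot (BLam M)
| sb_var n : sb (BVar n) (BVar n)
| sb_lam A B : sb A B -> sb (BLam A) (BLam B)
| sb_app A1 A2 B1 B2 : sb A1 B1 -> sb A2 B2 -> sb (BApp A1 A2) (BApp B1 B2).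

Lemma sb_refl A : sb A A.
Proof. induction A; constructor; auto. Qed.

Lemma sb_trans A B C : sb A B -> sb B C -> sb A C.
Proof.
  intro H; revert C; induction H; intros C H'; inversion H'; subst; try constructor; auto.
Qed.

Lemma below_sb A B : below A B -> sb A B.
Proof.
  intro H; induction H.
  - apply sb_refl.
  - eapply sb_trans; eauto.
  - constructor.
  - constructor.
  - constructor; auto.
  - constructor; auto. apply sb_refl.
  - constructor; auto. apply sb_refl.
Qed.

Lemma sb_below A B : sb A B -> below A B.
Proof.
  intro H; induction H.
  - apply below_refl.
  - apply below_bot_var.
  - apply below_bot_lam.
  - apply below_refl.
  - apply below_lam; auto.
  - eapply below_trans; [apply below_appl; eauto|apply below_appr; eauto].
Qed.

Lemma sb_embed_var A n : sb A (embed (Var n)) -> A = BBot \/ A = BVar n.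
Proof. simpl; intro H; inversion H; auto. Qed.

Lemma sb_embed_lam A b : sb A (embed (Lam b)) -> A = BBot \/ exists Ab, A = BLam Ab /\ sb Ab (embed b).
Proof. simpl; intro H; inversion H; subst; eauto. Qed.

Lemma sb_embed_app A a c : sb A (embed (App a c)) -> exists Aa Ac, A = BApp Aa Ac /\ sb Aa (embed a) /\ sb Ac (embed c).
Proof. simpl; intro H; inversion H; subst; eauto. Qed.

Lemma sb_var_inv n N : sb (BVar n) (embed N) -> N = Var n.
Proof. destruct N; simpl; intro H; inversion H; auto. Qed.

Lemma sb_lam_inv A N : sb (BLam A) (embed N) -> exists b, N = Lam b /\ sb A (embed b).
Proof. destruct N; simpl; intro H; inversion H; subst; eauto. Qed.

Lemma sb_app_inv A1 A2 N : sb (BApp A1 A2) (embed N) -> exists a c, N = App a c /\ sb A1 (embed a) /\ sb A2 (embed c).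
Proof. destruct N; simpl; intro H; inversion H; subst; eauto. Qed.

Lemma sb_bot_inv N : sb BBot (embed N) -> is_value N.
Proof. destruct N; simpl; intro H; inversion H; auto. Qed.

Lemma isA_app_head X Y : is_A (BApp X Y) -> (forall z, X <> BLam z) -> head_app (BApp X Y).
Proof.
  intros H Hx. inversion H; subst.
  - inversion H0; subst; auto.
  - exfalso; eapply Hx; eauto.
Qed.

Lemma isA_lam a : is_A (BLam a) -> is_A a.
Proof.
  intro H; inversion H; subst. inversion H0; subst; auto. inversion H1.
Qed.

Lemma lam_decomp1 b L : forall G s, ty G (Lam b) L s -> exists Jb, tys b Jb /\
  (Jb = [] -> L = [] /\ env_eq G empty) /\ s = length Jb + total Jb /\
  forall b' Jb', shape Jb' = shape Jb -> tys b' Jb' -> ty G (Lam b') L (length Jb + total Jb').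
Proof.
  induction L as [|a L IH]; intros G s H.
  - apply inv_nil in H as [H ->]. exists []; split; [constructor|]. split; [auto|]. split; [reflexivity|].
    intros b' Jb' E _. destruct Jb'; try discriminate. apply T_nil; auto.
  - destruct (inv_cons _ _ _ _ _ H) as (Gb&G2&P0&Q0&s1&s2&->&Ha&Hb&Hc&Hd&->).
    destruct (IH _ _ Hc) as (Jr&HJr&Hnil&Hs2&R).
    exists (((Gb, Q0), s1) :: Jr); repeat split.
    + constructor; auto.
    + discriminate.
    + discriminate.
    + simpl; lia.
    + intros b' Jb' E HT. destruct Jb' as [|j' Jr']; try discriminate.
      simpl in E. injection E as E1 E2. inversion HT; subst.
      pose proof (R _ _ E2 H3) as T2. rewrite E1 in H2; simpl in H2.
      simpl. replace (S (length Jr + (snd j' + total Jr'))) with (S (snd j' + (length Jr + total Jr'))) by lia.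
      eapply T_cons; eauto.
Qed.

Lemma lam_decomp b J : tys (Lam b) J -> exists Jb, tys b Jb /\
  (Jb = [] -> Forall (fun j => snd (fst j) = [] /\ env_eq (fst (fst j)) empty) J) /\
  total J = length Jb + total Jb /\
  forall b' Jb', shape Jb' = shape Jb -> tys b' Jb' ->
    exists J', shape J' = shape J /\ tys (Lam b') J' /\ total J' = length Jb + total Jb'.
Proof.
  induction J as [|[[G L] s] J IH]; intro H.
  - exists []; split; [constructor|]. split; [intros; constructor|]. split; [reflexivity|].
    intros b' Jb' E _. destruct Jb'; try discriminate. exists []; split; [reflexivity|]. split; [constructor|reflexivity].
  - inversion H as [|? ? H1 H2]; subst. simpl in H1.
    destruct (lam_decomp1 _ _ _ _ H1) as (Jb1&T1&N1&S1&R1).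
    destruct (IH H2) as (Jb2&T2&N2&S2&R2).
    exists (Jb1 ++ Jb2); repeat split.
    + apply Forall_app; auto.
    + intro E. apply app_eq_nil in E as [E1 E2]. destruct (N1 E1) as [-> HG].
      constructor; auto.
    + simpl. rewrite length_app, total_app. lia.
    + intros b' Jb' E HT. unfold shape in E; rewrite map_app in E.
      apply map_eq_app in E as (Jb1'&Jb2'&->&E1&E2). apply Forall_app in HT as [HT1 HT2].
      destruct (R2 _ _ E2 HT2) as (J'&EJ&TJ&SJ).
      exists (((G, L), length Jb1 + total Jb1') :: J'); repeat split.
      * simpl. f_equal. auto.
      * constructor; auto. simpl. apply R1; auto.
      * simpl. rewrite length_app, total_app, SJ. lia.
Qed.

Lemma app_decomp a c J : tys (App a c) J -> exists Ja Jc, tys a Ja /\ tys c Jc /\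
  length Ja = length J /\ length Jc = length J /\ Forall (fun j => exists P Q, snd (fst j) = [Arr P Q]) Ja /\
  total J = length J + total Ja + total Jc /\
  forall a' c' Ja' Jc', shape Ja' = shape Ja -> shape Jc' = shape Jc -> tys a' Ja' -> tys c' Jc' ->
    exists J', shape J' = shape J /\ tys (App a' c') J' /\ total J' = length J + total Ja' + total Jc'.
Proof.
  induction J as [|[[G L] s] J IH]; intro H.
  - exists [], []. split; [constructor|]. split; [constructor|]. split; [reflexivity|]. split; [reflexivity|].
    split; [constructor|]. split; [reflexivity|].
    intros a' c' Ja' Jc' E1 E2 _ _. destruct Ja', Jc'; try discriminate.
    exists []; split; [reflexivity|]; split; [constructor|reflexivity].
  - inversion H as [|? ? H1 H2]; subst. simpl in H1.
    apply inv_app in H1 as (G1&G2&P0&Q0&s1&s2&H1&H3&E&HQ&->).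
    destruct (IH H2) as (Ja&Jc&Ta&Tc&La&Lc&Fa&St&R).
    exists (((G1, [Arr P0 Q0]), s1) :: Ja), (((G2, P0), s2) :: Jc).
    split; [constructor; auto|]. split; [constructor; auto|]. split; [simpl; lia|]. split; [simpl; lia|].
    split; [constructor; [exists P0, Q0; reflexivity|exact Fa]|]. split; [simpl; lia|].
    + intros a' c' Ja' Jc' E1 E2 T1 T2.
      destruct Ja' as [|ja Ja']; try discriminate. destruct Jc' as [|jc Jc']; try discriminate.
      simpl in E1, E2. injection E1 as E1 E1'. injection E2 as E2 E2'.
      inversion T1 as [|? ? T1a T1b]; subst. inversion T2 as [|? ? T2a T2b]; subst.
      destruct (R _ _ _ _ E1' E2' T1b T2b) as (J'&EJ&TJ&SJ).
      rewrite E1 in T1a; rewrite E2 in T2a; simpl in T1a, T2a.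
      exists (((G, L), S (snd ja + snd jc)) :: J'); repeat split.
      * simpl. f_equal; auto.
      * constructor; auto. simpl. eapply T_app; eauto.
      * simpl. rewrite SJ. lia.
Qed.

Definition Dec (J : list typing) (N : term) : Prop :=
  exists N1 J1, step_beta N N1 /\ shape J1 = shape J /\ tys N1 J1 /\ total J1 < total J.

Lemma root_aux b c J : is_value c -> tys (App (Lam b) c) J ->
  exists J1, shape J1 = shape J /\ tys (subst0 c b) J1 /\ total J1 + length J <= total J.
Proof.
  intro Hv; induction J as [|j J IH]; intro H.
  - exists []; split; [reflexivity|split; [constructor|simpl; lia]].
  - inversion H as [|? ? H1 H2]; subst.
    destruct (beta_sr _ _ _ _ _ Hv H1) as (s'&Hs&Hlt).
    destruct (IH H2) as (J1&E&T&Le).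
    exists ((fst j, s') :: J1); split; [simpl; f_equal; auto|]. split; [constructor; auto|simpl; lia].
Qed.

Lemma root_dec b c J : J <> [] -> is_value c -> tys (App (Lam b) c) J -> Dec J (App (Lam b) c).
Proof.
  intros HJ Hv H. destruct (root_aux _ _ _ Hv H) as (J1&E&T&Le).
  exists (subst0 c b), J1; repeat split; auto.
  - apply cc_root; constructor; auto.
  - destruct J; [congruence|simpl in *; lia].
Qed.

Lemma arr_nil_contra (Ja : list typing) : Ja <> [] ->
  Forall (fun j => exists P Q, snd (fst j) = [Arr P Q]) Ja ->
  Forall (fun j => snd (fst j) = []) Ja -> False.
Proof.
  intros HJ F1 F2. destruct Ja as [|j Ja]; [congruence|].
  inversion F1 as [|? ? (P&Q&E1) _]; inversion F2 as [|? ? E2 _]; subst. rewrite E1 in E2; discriminate.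
Qed.

Lemma readout N : forall J, J <> [] -> tys N J -> ~ Dec J N -> ~ (exists N1, step_sigma N N1) ->
  exists A, is_A A /\ sb A (embed N) /\ (A = BBot -> Forall (fun j => snd (fst j) = []) J) /\
    forall N', sb A (embed N') -> exists J', shape J' = shape J /\ tys N' J'.
Proof.
  induction N as [n|b IH|a IHa c IHc]; intros J HJ T ND NS.
  - exists (BVar n); split; [apply A_B, B_var|]. split; [apply sb_var|]. split; [discriminate|].
    intros N' H. apply sb_var_inv in H; subst. exists J; auto.
  - destruct (lam_decomp _ _ T) as (Jb&Tb&Nb&St&R).
    destruct Jb as [|jb Jb'] eqn:EJb.
    + specialize (Nb eq_refl). exists BBot; split; [apply A_B, B_bot|]. split; [apply sb_bl|].
      split; [intros _; eapply Forall_impl; [|exact Nb]; intros j [? ?]; auto|].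
      intros N' H. apply sb_bot_inv in H.
      exists (map (fun j : typing => (fst j, 0)) J); split.
      * unfold shape; rewrite map_map; reflexivity.
      * unfold tys; apply Forall_map. eapply Forall_impl; [|exact Nb]. intros j [E1 E2]. simpl.
        rewrite E1. apply value_nil_ty; auto.
    + rewrite <- EJb in *.
      assert (HJb : Jb <> []) by (rewrite EJb; discriminate).
      assert (NDb : ~ Dec Jb b).
      { intros (b1&Jb1&Hs&E&T1&Lt). apply ND. destruct (R _ _ E T1) as (J'&E'&T'&S').
        exists (Lam b1), J'; repeat split; auto; [apply cc_lam; auto|lia]. }
      assert (NSb : ~ (exists b1, step_sigma b b1)).
      { intros (b1&Hs). apply NS. exists (Lam b1); apply cc_lam; auto. }
      destruct (IH Jb HJb Tb NDb NSb) as (Ab&IA&SA&_&RA).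
      * exists (BLam Ab); split; [apply A_B, B_lam; auto|]. split; [apply sb_lam; auto|]. split; [discriminate|].
        intros N' H. apply sb_lam_inv in H as (b'&->&H). destruct (RA _ H) as (Jb''&E&T'').
        destruct (R _ _ E T'') as (J'&E'&T'&_). eauto.
  - destruct (app_decomp _ _ _ T) as (Ja&Jc&Ta&Tc&La&Lc&Fa&St&R).
    assert (HJa : Ja <> []) by (intro E; subst; destruct J; simpl in La; [congruence|discriminate]).
    assert (HJc : Jc <> []) by (intro E; subst; destruct J; simpl in Lc; [congruence|discriminate]).
    assert (NDa : ~ Dec Ja a).
    { intros (a1&Ja1&Hs&E&T1&Lt). apply ND. destruct (R _ _ _ _ E eq_refl T1 Tc) as (J'&E'&T'&S').
      exists (App a1 c), J'; repeat split; auto; [apply cc_appl; auto|lia]. }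
    assert (NSa : ~ (exists a1, step_sigma a a1)).
    { intros (a1&Hs). apply NS. exists (App a1 c); apply cc_appl; auto. }
    assert (NDc : ~ Dec Jc c).
    { intros (c1&Jc1&Hs&E&T1&Lt). apply ND. destruct (R _ _ _ _ eq_refl E Ta T1) as (J'&E'&T'&S').
      exists (App a c1), J'; repeat split; auto; [apply cc_appr; auto|lia]. }
    assert (NSc : ~ (exists c1, step_sigma c c1)).
    { intros (c1&Hs). apply NS. exists (App a c1); apply cc_appr; auto. }
    destruct (IHa Ja HJa Ta NDa NSa) as (Aa&IAa&SAa&BAa&RAa).
    destruct (IHc Jc HJc Tc NDc NSc) as (Ac&IAc&SAc&BAc&RAc).
    exists (BApp Aa Ac); split; [|split; [simpl; apply sb_app; auto|split; [discriminate|]]].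
    + destruct a as [x|b|a1 a2].
      * destruct (sb_embed_var _ _ SAa) as [->| ->].
        { exfalso; exact (arr_nil_contra Ja HJa Fa (BAa eq_refl)). }
        apply A_B, B_head, H_base. inversion IAc as [t Hb|a0 h Ha Hh]; subst; auto.
        exfalso. destruct c as [|c0|c1 c2]; simpl in SAc; try (inversion SAc; fail).
        inversion SAc as [| | | | |A1 A2 B1 B2 S1 S2]; subst.
        apply sb_lam_inv in S1 as (b1&->&_).
        apply NS. eexists; apply cc_root; apply sr3; simpl; auto.
      * destruct (sb_embed_lam _ _ SAa) as [->|(Ab&->&SAb)].
        { exfalso; exact (arr_nil_contra Ja HJa Fa (BAa eq_refl)). }
        apply A_C; [apply isA_lam; auto|].
        destruct c as [y|c0|c1 c2].
        { exfalso; apply ND; apply root_dec; simpl; auto. }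
        { exfalso; apply ND; apply root_dec; simpl; auto. }
        destruct (sb_embed_app _ _ _ SAc) as (X&Y&->&SX&SY).
        apply isA_app_head; auto. intros z ->.
        destruct c1; simpl in SX; inversion SX; subst.
        apply NS. eexists; apply cc_root; apply sr3; simpl; auto.
      * destruct (sb_embed_app _ _ _ SAa) as (X&Y&->&SX&SY).
        apply A_B, B_head, H_step; auto. apply isA_app_head; auto. intros z ->.
        destruct a1; simpl in SX; inversion SX; subst.
        apply NS. eexists; apply cc_root; apply sr1.
    + intros N' H. apply sb_app_inv in H as (a'&c'&->&H1&H2).
      destruct (RAa _ H1) as (Ja'&Ea&Ta'). destruct (RAc _ H2) as (Jc'&Ec&Tc').
      destruct (R _ _ _ _ Ea Ec Ta' Tc') as (J'&E'&T'&_). eauto.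
Qed.

Lemma shape_len J1 J2 : shape J1 = shape J2 -> length J1 = length J2.
Proof. intro E. apply (f_equal (@length _)) in E. unfold shape in E. rewrite !length_map in E. auto. Qed.

Lemma tys_sigma N N1 J : step_sigma N N1 -> tys N J -> tys N1 J.
Proof. intros Hs T. eapply Forall_impl; [|exact T]. intros j Hj. apply (step_sigma_pres _ _ Hs); auto. Qed.

Lemma extract n : forall m N J, total J < n -> phi N < m -> J <> [] -> tys N J ->
  exists N'' A, red_v N N'' /\ is_A A /\ sb A (embed N'') /\
    forall N', sb A (embed N') -> exists J', shape J' = shape J /\ tys N' J'.
Proof.
  induction n as [|n IHn]; intros m N J Hn; [lia|].
  revert N J Hn. induction m as [|m IHm]; intros N J Hn Hm HJ T; [lia|].
  destruct (classic (Dec J N)) as [(N1&J1&Hs&E&T1&Lt)|ND].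
  - assert (HJ1 : J1 <> []) by (intro; subst; destruct J; [congruence|discriminate]).
    destruct (IHn (S (phi N1)) N1 J1 ltac:(lia) ltac:(lia) HJ1 T1) as (N''&A&Hr&IA&SA&RA).
    exists N'', A; repeat split; auto.
    + eapply rt_trans; [apply rt_step, beta_v; exact Hs|exact Hr].
    + intros N' H. destruct (RA _ H) as (J'&E'&T'). exists J'; split; auto. congruence.
  - destruct (classic (exists N1, step_sigma N N1)) as [(N1&Hs)|NS].
    + pose proof (sigma_phi _ _ Hs).
      destruct (IHm N1 J Hn ltac:(lia) HJ (tys_sigma _ _ _ Hs T)) as (N''&A&Hr&IA&SA&RA).
      exists N'', A; repeat split; auto.
      eapply rt_trans; [apply rt_step, sigma_v; exact Hs|exact Hr].
    + destruct (readout N J HJ T ND NS) as (A&IA&SA&_&RA).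
      exists N, A; repeat split; auto. apply rt_refl.
Qed.

Lemma tys_red_exp N N3 J3 : red_v N N3 -> tys N3 J3 -> exists J4, shape J4 = shape J3 /\ tys N J4.
Proof.
  intros Hr T. induction J3 as [|j J3 IH].
  - exists []; split; auto; constructor.
  - inversion T as [|? ? T1 T2]; subst. destruct (IH T2) as (J4&E&T4).
    destruct (red_v_exp _ _ Hr _ _ _ T1) as [s' Hs'].
    exists ((fst j, s') :: J4); split; [simpl; f_equal; auto|constructor; auto].
Qed.

Lemma half M N C : BT_eq M N -> converges (plug C M) -> converges (plug C N).
Proof.
  intros HBT HC. destruct (complete _ HC) as [s Hs].
  destruct (ctx_decomp _ _ _ _ _ Hs) as (J&T&R).
  destruct J as [|j J'] eqn:EJ.
  - destruct (R N [] eq_refl (Forall_nil _)) as [s' Hs']. eapply sound; [reflexivity|exact Hs'].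
  - rewrite <- EJ in *. assert (HJ : J <> []) by (rewrite EJ; discriminate).
    destruct (extract (S (total J)) (S (phi M)) M J ltac:(lia) ltac:(lia) HJ T) as (N''&A&Hr&IA&SA&RA).
    assert (HA : approximants M A) by (split; auto; exists N''; split; auto; apply sb_below; auto).
    apply HBT in HA as (_&N3&Hr3&B3).
    destruct (RA _ (below_sb _ _ B3)) as (J3&E3&T3).
    destruct (tys_red_exp _ _ _ Hr3 T3) as (J4&E4&T4).
    destruct (R N J4 ltac:(congruence) T4) as [s' Hs']. eapply sound; [reflexivity|exact Hs'].
Qed.

Theorem theorem4p16 (M N : term) : BT_eq M N -> obs_equiv M N.
Proof.
  intros H C _ _. split; apply half; auto.
  intro A. symmetry. apply H.
Qed.
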